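(* Let $G$ be a group and $c\in G$. If the set $\{(x,y)\in G^2:[x,y]=c\}$ is $4$-large in $G^2$, then $G$ is abelian and $c=1$. Consequently, if $\mu$ is a left-invariant probability measure on some algebra of subsets of $G^2$ with inner measure $\mu_*$, and $G$ is not abelian or $c\ne1$, then $\mu_*(\{(x,y)\in G^2:[x,y]=c\})\le\frac34$.
   Context: $[x,y]=x^{-1}y^{-1}xy$. A subset $X$ of a group $K$ is $k$-large in $K$ if the intersection of any $k$ left translates $a_1X\cap\dots\cap a_kX$ ($a_i\in K$) is non-empty. The inner measure is $\mu_*(X)=\sup\{\mu(Y):Y\subseteq X\text{ measurable}\}$. *)

(* Defs.v *)
From HB Require Import structures.
From mathcomp Require Import all_boot all_order all_algebra.
From mathcomp Require Import classical_sets boolp reals.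
Set Implicit Arguments. Unset Strict Implicit. Unset Printing Implicit Defensive.
Import Order.TTheory GRing.Theory Num.Theory.
Local Open Scope classical_set_scope.
Local Open Scope ring_scope.

Record is_group (G : Type) (mul : G -> G -> G) (inv : G -> G) (e : G) : Prop := {
  grp_assoc : forall x y z, mul x (mul y z) = mul (mul x y) z;
  grp_mul1g : forall x, mul e x = x;
  grp_mulg1 : forall x, mul x e = x;
  grp_mulVg : forall x, mul (inv x) x = e;
  grp_mulgV : forall x, mul x (inv x) = e }.

Definition abelian_grp (G : Type) (mul : G -> G -> G) : Prop :=
  forall x y, mul x y = mul y x.

Definition commutator (G : Type) (mul : G -> G -> G) (inv : G -> G) (x y : G) : G :=
  mul (mul (mul (inv x) (inv y)) x) y.

Definition mul2 (G : Type) (mul : G -> G -> G) (a b : G * G) : G * G :=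
  (mul a.1 b.1, mul a.2 b.2).

Definition ltrans (K : Type) (mul : K -> K -> K) (a : K) (X : set K) : set K :=
  [set z | exists2 x, X x & z = mul a x].

Definition k_large (K : Type) (mul : K -> K -> K) (k : nat) (X : set K) : Prop :=
  forall a : 'I_k -> K, exists z, forall i, ltrans mul (a i) X z.

Definition comm_fiber (G : Type) (mul : G -> G -> G) (inv : G -> G) (c : G)
  : set (G * G) := [set p | commutator mul inv p.1 p.2 = c].

Definition set_algebra (T : Type) (A : set (set T)) : Prop :=
  [/\ A setT, (forall X, A X -> A (~` X)) & (forall X Y, A X -> A Y -> A (X `|` Y))].

Definition prob_measure_on (R : realType) (T : Type) (A : set (set T))
  (mu : set T -> R) : Prop :=
  [/\ forall X, A X -> 0 <= mu X, mu setT = 1 &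
      forall X Y, A X -> A Y -> X `&` Y = set0 -> mu (X `|` Y) = mu X + mu Y].

Definition left_invariant (R : realType) (K : Type) (mul : K -> K -> K)
  (A : set (set K)) (mu : set K -> R) : Prop :=
  forall a X, A X -> A (ltrans mul a X) /\ mu (ltrans mul a X) = mu X.

Definition inner_measure (R : realType) (T : Type) (A : set (set T))
  (mu : set T -> R) (X : set T) : R :=
  sup [set mu Y | Y in [set Y | A Y /\ Y `<=` X]].

(* Main.v *)
Require Import Defs.
From HB Require Import structures.
From mathcomp Require Import all_boot all_order all_algebra.
From mathcomp Require Import classical_sets boolp reals.
Import Order.TTheory GRing.Theory Num.Theory.
Local Open Scope classical_set_scope.
Local Open Scope ring_scope.
Set Implicit Arguments. Unset Strict Implicit.

Lemma lcancel_g (G : Type) (mul : G -> G -> G) (inv : G -> G) (e : G)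
  (HG : is_group mul inv e) a b c : mul a b = mul a c -> b = c.
Proof.
move=> E; have := congr1 (mul (inv a)) E.
by rewrite !(grp_assoc HG) (grp_mulVg HG) !(grp_mul1g HG).
Qed.

Lemma rcancel_g (G : Type) (mul : G -> G -> G) (inv : G -> G) (e : G)
  (HG : is_group mul inv e) a b c : mul b a = mul c a -> b = c.
Proof.
move=> E; have := congr1 (fun t => mul t (inv a)) E.
by rewrite /= -!(grp_assoc HG) (grp_mulgV HG) !(grp_mulg1 HG).
Qed.

Lemma invM_g (G : Type) (mul : G -> G -> G) (inv : G -> G) (e : G)
  (HG : is_group mul inv e) a b : inv (mul a b) = mul (inv b) (inv a).
Proof.
apply: (lcancel_g HG (a := mul a b)).
rewrite (grp_mulgV HG) -(grp_assoc HG) [mul b _](grp_assoc HG).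
by rewrite (grp_mulgV HG) (grp_mul1g HG) (grp_mulgV HG).
Qed.

Lemma key_g (G : Type) (mul : G -> G -> G) (inv : G -> G) (e : G)
  (HG : is_group mul inv e) x y h :
  commutator mul inv x y = commutator mul inv x (mul h y) -> mul x h = mul h x.
Proof.
rewrite /commutator (invM_g HG) => E.
have E1 : mul (inv x) (mul (inv y) (mul x y)) =
          mul (inv x) (mul (inv y) (mul (mul (mul (inv h) x) h) y)).
  by rewrite !(grp_assoc HG) E !(grp_assoc HG).
move/(lcancel_g HG)/(lcancel_g HG)/(rcancel_g HG): E1 => E2.
by rewrite {2}E2 !(grp_assoc HG) (grp_mulgV HG) (grp_mul1g HG).
Qed.

Lemma part1 (G : Type) (mul : G -> G -> G) (inv : G -> G) (e : G)
  (HG : is_group mul inv e) (c : G) :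
  k_large (mul2 mul) 4 (comm_fiber mul inv c) -> abelian_grp mul /\ c = e.
Proof.
move=> HL.
have ab : abelian_grp mul.
  move=> g h.
  pose a : 'I_4 -> G * G := fun i => match nat_of_ord i with
     0 => (e, e) | 1 => (e, h) | 2 => (g, e) | _ => (g, h) end.
  have [[z1 z2] H] := HL a.
  have := H (@Ordinal 4 0 isT); have := H (@Ordinal 4 1 isT);
  have := H (@Ordinal 4 2 isT); have := H (@Ordinal 4 3 isT).
  rewrite /ltrans /a /mul2 /comm_fiber /=.
  case=> [[w31 w32]] /= H3 [E31 E32].
  case=> [[w21 w22]] /= H2 [E21 E22].
  case=> [[w11 w12]] /= H1 [E11 E12].
  case=> [[w01 w02]] /= H0 [E01 E02].
  rewrite (grp_mul1g HG) in E01; rewrite (grp_mul1g HG) in E02.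
  rewrite (grp_mul1g HG) in E11; rewrite (grp_mul1g HG) in E22.
  have K1 : mul w01 h = mul h w01.
    apply: (key_g HG (y := w12)).
    have A : commutator mul inv z1 z2 = c by rewrite E01 E02.
    have B : commutator mul inv z1 w12 = c by rewrite E11.
    by rewrite -E01 -E12 B A.
  have Ew : w31 = w21 by apply: (lcancel_g HG (a := g)); rewrite -E31 -E21.
  have K2 : mul w21 h = mul h w21.
    apply: (key_g HG (y := w32)). 
    have C : commutator mul inv w21 z2 = c by rewrite E22.
    have D : commutator mul inv w21 w32 = c by rewrite -Ew.
    by rewrite -E32 C D.
  have Ez : w01 = mul g w21 by rewrite -E01 E21.
  rewrite Ez in K1.
  have : mul (mul g h) w21 = mul (mul h g) w21.
    by rewrite -(grp_assoc HG) -K2 (grp_assoc HG) K1 (grp_assoc HG).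
  exact: (rcancel_g HG).
split=> //.
have [[z1 z2] H] := HL (fun _ => (e, e)).
have [[w1 w2] /= Hw [E1 E2]] := H (@Ordinal 4 0 isT).
rewrite -Hw /commutator (ab (inv w1)) -(grp_assoc HG _ (inv w1)).
by rewrite (grp_mulVg HG) (grp_mulg1 HG) (grp_mulVg HG).
Qed.

From mathcomp Require Import lra.

Lemma set_ext (T : Type) (X Y : set T) : (forall z, X z <-> Y z) -> X = Y.
Proof. by move=> H; apply/funext => z; apply/propext; apply: H. Qed.

Section Meas.
Lemma alg_I (T : Type) (A : set (set T)) :
  set_algebra A -> forall X Y, A X -> A Y -> A (X `&` Y).
Proof.
case=> hT hC hU X Y AX AY.
have -> : X `&` Y = ~` (~` X `|` ~` Y).
  apply: set_ext => z /=; split; first by case=> ? ? [].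
  by move=> H; split; apply: contrapT => N; apply: H; [left|right].
by apply hC; apply hU; apply hC.
Qed.

Lemma meas_C (R : realType) (T : Type) (A : set (set T)) (mu : set T -> R) :
  set_algebra A -> prob_measure_on A mu -> forall X, A X -> mu (~` X) = 1 - mu X.
Proof.
move=> [hT hC hU] [m0 m1 madd] X AX.
have : mu (X `|` ~` X) = mu X + mu (~` X).
  apply: madd => //; first exact: hC.
  by apply: set_ext => z /=; split => // [[]].
have -> : X `|` ~` X = setT.
  by apply: set_ext => z /=; split => // _; by case: (pselect (X z)) => H; [left|right].
rewrite m1 => ->; lra.
Qed.
End Meas.

Lemma meas_U (R : realType) (T : Type) (A : set (set T)) (mu : set T -> R) :
  set_algebra A -> prob_measure_on A mu -> forall X Y, A X -> A Y ->
  mu (X `|` Y) <= mu X + mu Y.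
Proof.
move=> hA hm X Y AX AY.
have hA' := hA; case: hA' => hT hC hU.
have hm' := hm; case: hm' => m0 m1 madd.
have AYX : A (Y `&` ~` X) by apply: alg_I => //; apply hC.
have E1 : X `|` Y = X `|` (Y `&` ~` X).
  apply: set_ext => z /=; split; last by case=> [|[]]; [left|right].
  case=> [|H]; [by left|]; case: (pselect (X z)) => H'; [by left|by right].
have E2 : Y = (Y `&` ~` X) `|` (Y `&` X).
  apply: set_ext => z /=; split; last by case=> [[]|[]].
  by move=> H; case: (pselect (X z)) => H'; [right|left].
have D1 : X `&` (Y `&` ~` X) = set0.
  by apply: set_ext => z /=; split => // [[? [? ?]]].
have D2 : (Y `&` ~` X) `&` (Y `&` X) = set0.
  by apply: set_ext => z /=; split => // [[[? ?] [? ?]]].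
have AYX2 : A (Y `&` X) by apply: alg_I.
rewrite E1 madd //.
have -> : mu Y = mu (Y `&` ~` X) + mu (Y `&` X) by rewrite {1}E2 madd.
have := m0 _ AYX2; lra.
Qed.

Lemma large_of (R : realType) (K : Type) (mul : K -> K -> K)
  (A : set (set K)) (mu : set K -> R) (Y : set K) :
  set_algebra A -> prob_measure_on A mu -> left_invariant mul A mu ->
  A Y -> 3 / 4 < mu Y -> k_large mul 4 Y.
Proof.
move=> hA hm hL AY lt a.
have hA' := hA; case: hA' => hT hC hU.
have hm' := hm; case: hm' => m0 m1 madd.
apply: contrapT => nE.
pose T n := ~` ltrans mul (a (inord n)) Y.
have AT n : A (T n) by apply hC; case: (hL (a (inord n)) Y AY).
have mT n : mu (T n) = 1 - mu Y.
  rewrite /T (meas_C hA hm); last by case: (hL (a (inord n)) Y AY).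
  by case: (hL (a (inord n)) Y AY) => _ ->.
have EU : T 0%N `|` T 1%N `|` T 2%N `|` T 3%N = setT.
  apply: set_ext => z; split => // _.
  have [i Hi] : exists i, ~ ltrans mul (a i) Y z.
    apply: contrapT => N; apply: nE; exists z => i.
    by apply: contrapT => N'; apply: N; exists i.
  rewrite -(inord_val i) in Hi.
  case: i Hi => [[|[|[|[|n]]]] Hn] //= Hi.
  - by left; left; left.
  - by left; left; right.
  - by left; right.
  - by right.
have := m1; rewrite -EU => E.
have U1 := meas_U hA hm (AT 0%N) (AT 1%N).
have A01 : A (T 0%N `|` T 1%N) by apply hU.
have U2 := meas_U hA hm A01 (AT 2%N).
have A012 : A (T 0%N `|` T 1%N `|` T 2%N) by apply hU.
have U3 := meas_U hA hm A012 (AT 3%N).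
rewrite !mT in U1 U2 U3.
lra.
Qed.

Lemma large_mono (K : Type) (mul : K -> K -> K) k (X Y : set K) :
  Y `<=` X -> k_large mul k Y -> k_large mul k X.
Proof.
move=> YX HY a; have [z Hz] := HY a; exists z => i.
by have [w Yw ->] := Hz i; exists w => //; apply: YX.
Qed.

Theorem corollary5p7 (G : Type) (mul : G -> G -> G) (inv : G -> G) (e : G)
  (HG : is_group mul inv e) (c : G) :
  (k_large (mul2 mul) 4 (comm_fiber mul inv c) -> abelian_grp mul /\ c = e) /\
  (forall (R : realType) (A : set (set (G * G))) (mu : set (G * G) -> R),
     set_algebra A -> prob_measure_on A mu -> left_invariant (mul2 mul) A mu ->
     (~ abelian_grp mul \/ c <> e) ->
     inner_measure A mu (comm_fiber mul inv c) <= 3 / 4).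
Proof.
split; first exact: part1.
move=> R A mu hA hm hL hn.
have hA' := hA; case: hA' => hT hC hU.
apply: ge_sup.
  exists (mu set0); exists set0 => //; split => //.
  by rewrite -setCT; apply hC.
move=> r [Y [AY YX] <-].
rewrite leNgt; apply/negP => lt.
have := part1 HG (large_mono YX (large_of hA hm hL AY lt)).
by case: hn => H [H1 H2].
Qed.
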